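(* Let $A$, $B$, $C$ be deterministic parity tree automata over the same finite alphabet with pairwise disjoint state sets, and let $p$ be a state of $C$. If $L(A)\le_W L(B)$, then $L(C_{p:=A})\le_W L(C_{p:=B})$.
   Context: Deterministic parity tree automata have a total transition function $\delta:Q\times\Sigma\to Q\times Q$; a transition $q\xrightarrow{\sigma}q_1,q_2$ has left target $q_1$ (direction 0) and right target $q_2$ (direction 1), written $q\xrightarrow{\sigma,0}q_1$, $q\xrightarrow{\sigma,1}q_2$. For a state $p$ of $C$, $C_{p:=A}$ is the automaton obtained from the disjoint union of $C$ and $A$ by redirecting every transition edge $r\xrightarrow{\sigma,d}p$ of $C$ to $r\xrightarrow{\sigma,d}q_0^A$ (where $q_0^A$ is the initial state of $A$); the initial state is that of $C$ (or $q_0^A$ if $p$ is the initial state of $C$). Acceptance: the highest rank occurring infinitely often on each path of the run is even. $\le_W$ is continuous (Wadge) reducibility. *)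

(* Defs.v *)
From mathcomp Require Import all_boot.
Set Implicit Arguments. Unset Strict Implicit. Unset Printing Implicit Defensive.

(* Infinite full binary trees labelled by Sigma: a node is a finite word over
   {0,1} = bool (false = direction 0 = left, true = direction 1 = right),
   listed from the root. *)
Definition tree (Sigma : Type) := seq bool -> Sigma.

Definition subtree (Sigma : Type) (t : tree Sigma) (d : bool) : tree Sigma :=
  fun w => t (d :: w).

Record dpta (Sigma : finType) := DPTA {
  state : finType;
  init : state;
  delta : state -> Sigma -> state * state;
  rank : state -> nat }.

Definition dir_target (S : Type) (pr : S * S) (d : bool) : S :=
  if d then pr.2 else pr.1.

Fixpoint state_at (Sigma : finType) (A : dpta Sigma) (q : state A)
    (t : tree Sigma) (v : seq bool) : state A :=
  match v with
  | [::] => q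
  | d :: v' => state_at (dir_target (delta q (t [::])) d) (subtree t d) v'
  end.

Definition run (Sigma : finType) (A : dpta Sigma) (t : tree Sigma) (v : seq bool)
  : state A := state_at (init A) t v.

Definition path_node (pi : nat -> bool) (n : nat) : seq bool := mkseq pi n.

Definition parity_ok (r : nat -> nat) : Prop :=
  exists m, ~~ odd m /\
    (forall N, exists n, N <= n /\ r n = m) /\
    (exists N, forall n, N <= n -> r n <= m).

Definition accepts (Sigma : finType) (A : dpta Sigma) (t : tree Sigma) : Prop :=
  forall pi : nat -> bool,
    parity_ok (fun n => rank (run A t (path_node pi n))).

Definition lang (Sigma : finType) (A : dpta Sigma) : tree Sigma -> Prop :=
  fun t => accepts A t.

Definition agree_upto (Sigma : Type) (n : nat) (t t' : tree Sigma) : Prop :=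
  forall v : seq bool, size v < n -> t v = t' v.

Definition continuous_tree (Sigma Gamma : Type) (f : tree Sigma -> tree Gamma) : Prop :=
  forall t n, exists m, forall t', agree_upto m t t' -> agree_upto n (f t) (f t').

Definition wadge_le (Sigma Gamma : Type) (L : tree Sigma -> Prop) (M : tree Gamma -> Prop)
  : Prop :=
  exists f, continuous_tree f /\ forall t, L t <-> M (f t).

(* C_{p:=A}: disjoint union of C and A (as a sum type), with every edge of C
   into p redirected to the initial state of A. *)
Section Subst.
Variables (Sigma : finType) (C : dpta Sigma) (p : state C) (A : dpta Sigma).

Definition subst_state : finType := (state C + state A)%type.

Definition redir (q : state C) : subst_state :=
  if q == p then inr (init A) else inl q.

Definition subst_init : subst_state := redir (init C).

Definition subst_delta (s : subst_state) (a : Sigma) : subst_state * subst_state :=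
  match s with
  | inl r => (redir (delta r a).1, redir (delta r a).2)
  | inr q => (inr (delta q a).1, inr (delta q a).2)
  end.

Definition subst_rank (s : subst_state) : nat :=
  match s with inl r => rank r | inr q => rank q end.

Definition subst : dpta Sigma := DPTA subst_init subst_delta subst_rank.
End Subst.

(* Main.v *)
From Stdlib Require Import Classical FunctionalExtensionality.
Require Import Defs.
From mathcomp Require Import all_boot.
Set Implicit Arguments. Unset Strict Implicit. Unset Printing Implicit Defensive.

Definition subtree_at (Sigma : Type) (t : tree Sigma) (u : seq bool) : tree Sigma :=
  fun w => t (u ++ w).

Lemma mkseq_split (T : Type) (f : nat -> T) k n :
  mkseq f (k + n) = mkseq f k ++ mkseq (fun i => f (k + i)) n.
Proof.
rewrite /mkseq iotaD map_cat add0n; congr (_ ++ _).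
by rewrite -(addn0 k) iotaDl -map_comp addn0.
Qed.

Lemma state_cat (Sigma : finType) (X : dpta Sigma) (s : state X) t u w :
  state_at s t (u ++ w) = state_at (state_at s t u) (subtree_at t u) w.
Proof. by elim: u s t => [//|d u IH] s t /=; rewrite IH. Qed.

Lemma state_inr (Sigma : finType) (C : dpta Sigma) (p : state C) (X : dpta Sigma)
  (q : state X) t w :
  @state_at _ (subst p X) (inr q) t w = inr (state_at q t w).
Proof. by elim: w q t => [//|d w IH] q t /=; case: d; rewrite IH. Qed.

Lemma parity_ext r1 r2 : r1 =1 r2 -> (parity_ok r1 <-> parity_ok r2).
Proof. by move=> H; have -> : r1 = r2 by apply: functional_extensionality. Qed.

Lemma parity_imp r1 r2 : r1 =1 r2 -> parity_ok r1 -> parity_ok r2.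
Proof. by move=> H; case: (parity_ext H). Qed.

Lemma parity_shift r k : parity_ok r <-> parity_ok (fun n => r (k + n)).
Proof.
split.
- move=> [m [Hm [Hi [N0 Hb]]]]; exists m; split=> //; split.
  + move=> N; have [n [Hn Hr]] := Hi (k + N); exists (n - k); split.
      by rewrite leq_subRL ?(leq_trans (leq_addr _ _) Hn) // addnC.
    by rewrite subnKC ?(leq_trans (leq_addr _ _) Hn).
  + exists N0 => n Hn; apply: Hb; exact: (leq_trans Hn (leq_addl _ _)).
- move=> [m [Hm [Hi [N0 Hb]]]]; exists m; split=> //; split.
  + move=> N; have [n [Hn Hr]] := Hi N; exists (k + n); split=> //.
    exact: (leq_trans Hn (leq_addl _ _)).
  + exists (k + N0) => n Hn.
    have Hk : k <= n by apply: leq_trans Hn; apply: leq_addr.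
    rewrite -(subnKC Hk); apply: Hb; by rewrite leq_subRL.
Qed.

Definition shiftp (pi : nat -> bool) k := fun i => pi (k + i).

Lemma split_ranks (Sigma : finType) (C : dpta Sigma) (p : state C) (X : dpta Sigma)
  (s0 : state (subst p X)) t pi k :
  state_at s0 t (path_node pi k) = inr (init X) ->
  (parity_ok (fun n => rank (state_at s0 t (path_node pi n))) <->
   parity_ok (fun n => rank (state_at (init X) (subtree_at t (path_node pi k))
                                   (path_node (shiftp pi k) n)))).
Proof.
move=> H; rewrite (parity_shift _ k); apply: parity_ext => n.
by rewrite /path_node mkseq_split state_cat -/(path_node pi k) H state_inr.
Qed.

Definition pcat (u : seq bool) (pi : nat -> bool) :=
  fun i => if i < size u then nth false u i else pi (i - size u).

Lemma pcat_node u pi : path_node (pcat u pi) (size u) = u.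
Proof.
rewrite /path_node -[RHS](mkseq_nth false u) /mkseq.
apply/eq_in_map => i; rewrite mem_iota add0n => /= Hi; by rewrite /pcat Hi.
Qed.

Lemma pcat_shift u pi : shiftp (pcat u pi) (size u) =1 pi.
Proof. by move=> i; rewrite /shiftp /pcat ltnNge leq_addr /= addKn. Qed.

Lemma sub_accepts (Sigma : finType) (C : dpta Sigma) (p : state C) (X : dpta Sigma)
  (s0 : state (subst p X)) t u :
  (forall pi, parity_ok (fun n => rank (state_at s0 t (path_node pi n)))) ->
  state_at s0 t u = inr (init X) -> accepts X (subtree_at t u).
Proof.
move=> H Hu pi'.
have Hn := pcat_node u pi'.
have := H (pcat u pi'); rewrite (split_ranks (k := size u)); last by rewrite Hn.
rewrite Hn /run; apply: parity_imp => n.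
by rewrite /path_node (eq_mkseq (pcat_shift u pi')).
Qed.

Fixpoint gaux (Sigma : finType) (C : dpta Sigma) (p : state C)
  (f : tree Sigma -> tree Sigma) (q : state C) (t : tree Sigma) (v : seq bool)
  {struct v} : Sigma :=
  if q == p then f t v else
  match v with
  | [::] => t [::]
  | d :: v' => gaux p f (dir_target (delta q (t [::])) d) (subtree t d) v'
  end.

Lemma gaux_eq (Sigma : finType) (C : dpta Sigma) (p : state C) f (q : state C) t :
  q = p -> gaux p f q t = f t.
Proof.
move=> ->; apply: functional_extensionality => v; by case: v => [|d v] /=; rewrite eqxx.
Qed.

Lemma gaux_sub (Sigma : finType) (C : dpta Sigma) (p : state C) f (q : state C) t d :
  q != p -> subtree (gaux p f q t) d =
            gaux p f (dir_target (delta q (t [::])) d) (subtree t d).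
Proof.
move=> Hq; apply: functional_extensionality => v; by rewrite /subtree /= (negbTE Hq).
Qed.

Lemma dir_redir (Sigma : finType) (C : dpta Sigma) (p : state C) X (x : state C * state C) d :
  dir_target (redir p X x.1, redir p X x.2) d = redir p X (dir_target x d).
Proof. by case: d. Qed.

Lemma rel (Sigma : finType) (A B C : dpta Sigma) (p : state C) f (q : state C) t v :
  (exists r, @state_at _ (subst p A) (redir p A q) t v = inl r /\
             @state_at _ (subst p B) (redir p B q) (gaux p f q t) v = inl r) \/
  (exists u w, v = u ++ w /\
     @state_at _ (subst p A) (redir p A q) t u = inr (init A) /\
     @state_at _ (subst p B) (redir p B q) (gaux p f q t) u = inr (init B) /\
     subtree_at (gaux p f q t) u = f (subtree_at t u)).
Proof.
elim: v q t => [|d v IH] q t.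
- case: (eqVneq q p) => [Hq|Hq].
  + right; exists [::], [::]; split=> //.
    rewrite /= /redir Hq eqxx gaux_eq //; split=> //; split=> //.
  + left; exists q; by rewrite /= /redir (negbTE Hq).
- case: (eqVneq q p) => [Hq|Hq].
  + right; exists [::], (d :: v); split=> //.
    rewrite /= /redir Hq eqxx gaux_eq //; split=> //; split=> //.
  + have Hr : forall X, redir p X q = inl q by move=> X; rewrite /redir (negbTE Hq).
    have Hg0 : gaux p f q t [::] = t [::] by rewrite /= (negbTE Hq).
    case: (IH (dir_target (delta q (t [::])) d) (subtree t d)) =>
      [[r [H1 H2]]|[u [w [Hv [H1 [H2 H3]]]]]].
    * left; exists r; rewrite /= !Hr /= (negbTE Hq) !dir_redir H1 gaux_sub //.
    * right; exists (d :: u), w; split; first by rewrite Hv.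
      rewrite /= !Hr /= (negbTE Hq) !dir_redir H1 gaux_sub //; split=> //; split=> //.
      change (subtree_at (subtree (gaux p f q t) d) u = f (subtree_at (subtree t d) u)); by rewrite gaux_sub.
Qed.

Lemma agree_sub (Sigma : Type) m (t t' : tree Sigma) d :
  agree_upto m.+1 t t' -> agree_upto m (subtree t d) (subtree t' d).
Proof. by move=> H v Hv; apply: H. Qed.

Lemma agree_mono (Sigma : Type) m m' (t t' : tree Sigma) :
  m <= m' -> agree_upto m' t t' -> agree_upto m t t'.
Proof. move=> Hm H v Hv; apply: H; exact: leq_trans Hv Hm. Qed.

Lemma gaux_cont (Sigma : finType) (C : dpta Sigma) (p : state C) f :
  continuous_tree f -> forall n (q : state C) t, exists m, forall t',
    agree_upto m t t' -> agree_upto n (gaux p f q t) (gaux p f q t').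
Proof.
move=> Hf; elim=> [|n IH] q t.
  by exists 0 => t' _ v.
case: (eqVneq q p) => [Hq|Hq].
  have [m Hm] := Hf t n.+1; exists m => t' H.
  by rewrite !gaux_eq //; apply: Hm.
have [m0 H0] := IH (dir_target (delta q (t [::])) false) (subtree t false).
have [m1 H1] := IH (dir_target (delta q (t [::])) true) (subtree t true).
exists (maxn m0 m1).+1 => t' H.
have Ht0 : t [::] = t' [::] by apply: H.
case=> [|d v] Hv; first by rewrite /= (negbTE Hq).
rewrite /= (negbTE Hq) -Ht0.
case: d Hv => Hv.
- apply: (H1 (subtree t' true)) => //.
  apply: (agree_mono (m' := maxn m0 m1)); first exact: leq_maxr.
  exact: agree_sub.
- apply: (H0 (subtree t' false)) => //.
  apply: (agree_mono (m' := maxn m0 m1)); first exact: leq_maxl.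
  exact: agree_sub.
Qed.

Theorem lemma5p5 (Sigma : finType) (A B C : dpta Sigma) (p : state C) :
  wadge_le (lang A) (lang B) ->
  wadge_le (lang (subst p A)) (lang (subst p B)).
Proof.
move=> [f [Hf Hred]].
exists (gaux p f (init C)); split.
  move=> t n; exact: gaux_cont.
move=> t; rewrite /lang /accepts /run /=.
set g := gaux p f (init C) t.
have key : forall pi,
  (forall n, exists r,
     @state_at _ (subst p A) (redir p A (init C)) t (path_node pi n) = inl r /\
     @state_at _ (subst p B) (redir p B (init C)) g (path_node pi n) = inl r) \/
  (exists k,
     @state_at _ (subst p A) (redir p A (init C)) t (path_node pi k) = inr (init A) /\
     @state_at _ (subst p B) (redir p B (init C)) g (path_node pi k) = inr (init B) /\
     subtree_at g (path_node pi k) = f (subtree_at t (path_node pi k))).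
  move=> pi.
  case: (classic (exists n u w, path_node pi n = u ++ w /\
     @state_at _ (subst p A) (redir p A (init C)) t u = inr (init A) /\
     @state_at _ (subst p B) (redir p B (init C)) g u = inr (init B) /\
     subtree_at g u = f (subtree_at t u))) => [[n [u [w [Hv Hr]]]]|Hno].
  + right; exists (size u).
    suff -> : path_node pi (size u) = u by [].
    have Hs : n = size u + size w.
      by rewrite -size_cat -Hv size_mkseq.
    move: Hv; rewrite Hs /path_node mkseq_split => /eqP.
    by rewrite eqseq_cat ?size_mkseq // => /andP [/eqP].
  + left => n.
    case: (@rel _ A B C p f (init C) t (path_node pi n)) => // H.
    exfalso; apply: Hno; exists n; exact: H.
split=> H pi.
- case: (key pi) => [Hl|[k [HA [HB Hg]]]].
  + have := H pi; apply: parity_imp => n.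
    by have [r [-> ->]] := Hl n.
  + rewrite (split_ranks HB) Hg.
    apply: (proj1 (Hred _)).
    exact: (sub_accepts H HA).
- case: (key pi) => [Hl|[k [HA [HB Hg]]]].
  + have := H pi; apply: parity_imp => n.
    by have [r [-> ->]] := Hl n.
  + rewrite (split_ranks HA).
    apply: (proj2 (Hred _)).
    rewrite -Hg.
    exact: (sub_accepts H HB).
Qed.
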